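(* For every $\alpha\in(1/2,1/\sqrt2)$, the set $S_\alpha$ satisfies $\dim_H S_\alpha=-\log2/\log\alpha$. In particular, for $h\in(1,2)$ and $\alpha=2^{-1/h}$, $\dim_H S_\alpha=h$.
   Context: Let $\mathcal{R}$ be counterclockwise rotation by $\pi/2$, $\mathcal{R}(x_1,x_2)=(-x_2,x_1)$. For $\alpha\in(1/2,1/\sqrt2)$ let $F_1(x)=(1,0)+\alpha\mathcal{R}x$, $F_2(x)=(-1,0)+\alpha\mathcal{R}x$, and for a finite word $w=(w_1,\dots,w_k)\in\{1,2\}^k$ let $F_w=F_{w_1}\circ\cdots\circ F_{w_k}$ ($F_\emptyset=\mathrm{Id}$). Let $I=[-1,1]\times\{0\}$. $S_\alpha$ is the compact set $S_\alpha=\overline{\bigcup_{k\ge0}\bigcup_{w\in\{1,2\}^k}F_w(I)}$, equivalently the unique nonempty compact set with $S_\alpha=I\cup F_1(S_\alpha)\cup F_2(S_\alpha)$. *)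

(* Defs.v *)
From Stdlib Require Import Reals Lra List.
Open Scope R_scope.

Definition pt := (R * R)%type.

Definition dist2 (x y : pt) : R :=
  sqrt ((fst x - fst y)^2 + (snd x - snd y)^2).

Definition rot (x : pt) : pt := (- snd x, fst x).

(* F_1 (true) and F_2 (false) *)
Definition Fmap (alpha : R) (b : bool) (x : pt) : pt :=
  let r := rot x in
  ((if b then 1 else -1) + alpha * fst r, alpha * snd r).

Definition Fword (alpha : R) (w : list bool) : pt -> pt :=
  fold_right (fun b g => fun x => Fmap alpha b (g x)) (fun x => x) w.

Definition Iseg (x : pt) : Prop := -1 <= fst x <= 1 /\ snd x = 0.

Definition Sunion (alpha : R) (x : pt) : Prop :=
  exists (w : list bool) (y : pt), Iseg y /\ x = Fword alpha w y.

Definition closure2 (A : pt -> Prop) (x : pt) : Prop :=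
  forall eps, 0 < eps -> exists y, A y /\ dist2 x y < eps.

Definition S_alpha (alpha : R) : pt -> Prop := closure2 (Sunion alpha).

Definition diam_le (U : pt -> Prop) (r : R) : Prop :=
  forall x y, U x -> U y -> dist2 x y <= r.

(* Diameters are replaced by positive
   upper bounds r_n (equivalent, since s > 0). *)
Definition hausdorff_null (s : R) (A : pt -> Prop) : Prop :=
  forall delta eps, 0 < delta -> 0 < eps ->
    exists (U : nat -> pt -> Prop) (r : nat -> R),
      (forall x, A x -> exists n, U n x) /\
      (forall n, 0 < r n <= delta /\ diam_le (U n) (r n)) /\
      (forall N, sum_f_R0 (fun n => Rpower (r n) s) N <= eps).

Definition is_glb (E : R -> Prop) (m : R) : Prop :=
  (forall x, E x -> m <= x) /\ (forall b, (forall x, E x -> b <= x) -> b <= m).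

Definition hausdorff_dim (A : pt -> Prop) (d : R) : Prop :=
  is_glb (fun s => 0 < s /\ hausdorff_null s A) d.

(* Main.v *)
Require Import Defs.
From Stdlib Require Import Reals.
Open Scope R_scope.
From Stdlib Require Import Lra Lia List ZArith FunctionalExtensionality ClassicalEpsilon Classical.
From Coquelicot Require Import Coquelicot.
Open Scope R_scope.

Definition sg (b:bool) : R := if b then 1 else -1.
Definition qq (a : R) := - (a*a).
Definition Vs (a : R) (b: nat->bool) := Series (fun l => sg (b l) * (qq a)^l).

Lemma Rabs_sg b : Rabs (sg b) = 1.
Proof. destruct b; simpl; unfold Rabs; destruct Rcase_abs; lra. Qed.

Lemma abs_term a b l : Rabs (sg (b l) * (qq a)^l) = (a*a)^l.
Proof.
  rewrite Rabs_mult, Rabs_sg, Rmult_1_l, <- RPow_abs. unfold qq.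
  rewrite Rabs_Ropp, Rabs_right; [ring|]. apply Rle_ge, Rle_0_sqr.
Qed.

Lemma aa_lt a : 0 < a -> a*a < 1 -> Rabs (a*a) < 1.
Proof. intros. rewrite Rabs_right; [lra|]. apply Rle_ge, Rle_0_sqr. Qed.

Lemma ex_abs a b : 0 < a -> a*a < 1 -> ex_series (fun l => Rabs (sg (b l) * (qq a)^l)).
Proof.
  intros. apply (ex_series_ext (fun l => (a*a)^l)).
  - intros; now rewrite abs_term.
  - apply ex_series_geom, aa_lt; auto.
Qed.

Lemma ex_V a b : 0 < a -> a*a < 1 -> ex_series (fun l => sg (b l) * (qq a)^l).
Proof.
  intros. apply ex_series_Rabs. apply ex_abs; auto.
Qed.

Lemma V_eq a b : 0 < a -> a*a < 1 -> Vs a b = sg (b 0%nat) + qq a * Vs a (fun l => b (S l)).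
Proof.
  intros. unfold Vs. rewrite Series_incr_1 by (apply ex_V; auto).
  rewrite <- Series_scal_l. f_equal. simpl; ring.
  apply Series_ext. intros; simpl; ring.
Qed.

Lemma V_bound a b : 0 < a -> a*a < 1 -> Rabs (Vs a b) <= / (1 - a*a).
Proof.
  intros. unfold Vs. eapply Rle_trans. apply Series_Rabs, ex_abs; auto.
  rewrite <- Series_geom by (apply aa_lt; auto).
  apply Series_le. intros; rewrite abs_term; split; [apply pow_le, Rle_0_sqr|lra].
  apply ex_series_geom, aa_lt; auto.
Qed.

Fixpoint ps (a : R) (b : nat -> bool) (m : nat) : R :=
  match m with O => 0 | S m' => sg (b O) + qq a * ps a (fun l => b (S l)) m' end.

Lemma V_shift a m : 0 < a -> a*a < 1 -> forall b,
  Vs a b = ps a b m + (qq a)^m * Vs a (fun l => b (m + l)%nat).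
Proof.
  intros Ha Ha1. induction m; intro b.
  - simpl. replace (fun l => b l) with b by reflexivity. ring.
  - rewrite V_eq at 1 by auto. rewrite IHm. simpl. ring.
Qed.

Definition gsep (a : R) := 2 - 2*(a*a)/(1-a*a).

Lemma qq_mul_abs a y : Rabs (qq a * y) = a*a * Rabs y.
Proof. unfold qq. rewrite Rabs_mult, Rabs_Ropp, Rabs_right. ring. apply Rle_ge, Rle_0_sqr. Qed.

Lemma sep1 a : 0 < a -> a*a < 1 -> forall m b b',
  (forall l, (l < m)%nat -> b l = b' l) -> b m <> b' m ->
  (a*a)^m * gsep a <= Rabs (Vs a b - Vs a b').
Proof.
  intros Ha Ha1. induction m; intros b b' Hag Hd.
  - rewrite (V_eq a b), (V_eq a b') by auto.
    pose proof (V_bound a (fun l => b (S l)) Ha Ha1) as B1.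
    pose proof (V_bound a (fun l => b' (S l)) Ha Ha1) as B2.
    set (y1 := Vs a (fun l => b (S l))) in *. set (y2 := Vs a (fun l => b' (S l))) in *.
    replace (sg (b 0%nat) + qq a * y1 - (sg (b' 0%nat) + qq a * y2)) with
      ((sg (b 0%nat) - sg (b' 0%nat)) + qq a * (y1 - y2)) by ring.
    assert (Hs : Rabs (sg (b 0%nat) - sg (b' 0%nat)) = 2).
    { destruct (b 0%nat), (b' 0%nat); try congruence; simpl; unfold Rabs; destruct Rcase_abs; lra. }
    assert (Hq : Rabs (qq a * (y1 - y2)) <= a*a * (2 * / (1 - a*a))).
    { rewrite qq_mul_abs. apply Rmult_le_compat_l. apply Rle_0_sqr.
      eapply Rle_trans. apply Rabs_triang. rewrite Rabs_Ropp. lra. }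
    pose proof (Rabs_triang_inv (sg (b 0%nat) - sg (b' 0%nat)) (- (qq a * (y1 - y2)))) as T.
    replace (sg (b 0%nat) - sg (b' 0%nat) - - (qq a * (y1 - y2))) with
      (sg (b 0%nat) - sg (b' 0%nat) + qq a * (y1 - y2)) in T by ring.
    rewrite Rabs_Ropp in T. unfold gsep. simpl. unfold Rdiv. lra.
  - rewrite (V_eq a b), (V_eq a b') by auto.
    rewrite (Hag 0%nat) by lia.
    replace (sg (b' 0%nat) + qq a * Vs a (fun l => b (S l)) -
      (sg (b' 0%nat) + qq a * Vs a (fun l => b' (S l)))) with
      (qq a * (Vs a (fun l => b (S l)) - Vs a (fun l => b' (S l)))) by ring.
    rewrite qq_mul_abs. simpl. rewrite Rmult_assoc.
    apply Rmult_le_compat_l. apply Rle_0_sqr.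
    apply IHm. intros; apply Hag; lia. exact Hd.
Qed.

Definition ev (u : nat -> bool) := fun l => u (2*l)%nat.
Definition od (u : nat -> bool) := fun l => u (S (2*l)).
Definition pnt a (u : nat -> bool) : pt := (Vs a (ev u), a * Vs a (od u)).

Fixpoint pre (u : nat -> bool) (n : nat) : list bool :=
  match n with O => nil | S n' => u O :: pre (fun i => u (S i)) n' end.

Lemma Fword_pre a m : forall u,
  Fword a (pre u (2*m)) (0,0) = (ps a (ev u) m, a * ps a (od u) m).
Proof.
  induction m; intro u.
  - simpl. f_equal; ring.
  - replace (2 * S m)%nat with (S (S (2*m))) by lia.
    simpl pre. simpl Fword. rewrite IHm.
    unfold Fmap, rot, ev, od; simpl.
    replace (fun l : nat => u (S (l + S (l + 0)))) with (fun l : nat => u (S (S (l + (l + 0)))))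
      by (apply functional_extensionality; intro; f_equal; lia).
    replace (fun l : nat => u (S (S (l + S (l + 0))))) with (fun l : nat => u (S (S (S (l + (l + 0))))))
      by (apply functional_extensionality; intro; f_equal; lia).
    f_equal; unfold sg, qq; destruct (u 0%nat), (u 1%nat); ring.
Qed.

Lemma sq_abs x : x^2 = Rabs x ^ 2.
Proof. unfold Rabs; destruct Rcase_abs; ring. Qed.

Lemma dist2_le x y : dist2 x y <= Rabs (fst x - fst y) + Rabs (snd x - snd y).
Proof.
  unfold dist2. rewrite <- (sqrt_pow2 (Rabs (fst x - fst y) + Rabs (snd x - snd y))).
  apply sqrt_le_1_alt. rewrite (sq_abs (fst x - fst y)), (sq_abs (snd x - snd y)).
  pose proof (Rabs_pos (fst x - fst y)); pose proof (Rabs_pos (snd x - snd y)). nra.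
  pose proof (Rabs_pos (fst x - fst y)); pose proof (Rabs_pos (snd x - snd y)). lra.
Qed.

Lemma dist2_ge1 x y : Rabs (fst x - fst y) <= dist2 x y.
Proof.
  unfold dist2. rewrite <- (sqrt_pow2 (Rabs (fst x - fst y))) by apply Rabs_pos.
  apply sqrt_le_1_alt. rewrite <- sq_abs. pose proof (pow2_ge_0 (snd x - snd y)). lra.
Qed.

Lemma dist2_ge2 x y : Rabs (snd x - snd y) <= dist2 x y.
Proof.
  unfold dist2. rewrite <- (sqrt_pow2 (Rabs (snd x - snd y))) by apply Rabs_pos.
  apply sqrt_le_1_alt. rewrite <- sq_abs. pose proof (pow2_ge_0 (fst x - fst y)). lra.
Qed.

Lemma pnt_in_S a u : 0 < a -> a*a < 1 -> S_alpha a (pnt a u).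
Proof.
  intros Ha Ha1 eps He.
  set (B := / (1 - a*a)).
  assert (HB : 0 < B) by (unfold B; apply Rinv_0_lt_compat; lra).
  assert (Haa: Rabs (a*a) < 1) by (rewrite Rabs_right; [lra| apply Rle_ge, Rle_0_sqr]).
  destruct (pow_lt_1_zero (a*a) Haa (eps / ((1 + a) * B))) as [N HN].
  { apply Rdiv_lt_0_compat; auto. apply Rmult_lt_0_compat; lra. }
  exists (Fword a (pre u (2*N)) (0,0)). split.
  - exists (pre u (2*N)), (0,0). split; [|reflexivity]. unfold Iseg; simpl; lra.
  - rewrite Fword_pre. eapply Rle_lt_trans. apply dist2_le. unfold pnt; simpl.
    rewrite (V_shift a N Ha Ha1 (ev u)), (V_shift a N Ha Ha1 (od u)).
    replace (ps a (ev u) N + qq a ^ N * Vs a (fun l => ev u (N + l)%nat) - ps a (ev u) N)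
      with (qq a ^ N * Vs a (fun l => ev u (N + l)%nat)) by ring.
    replace (a * (ps a (od u) N + qq a ^ N * Vs a (fun l => od u (N + l)%nat)) - a * ps a (od u) N)
      with (a * (qq a ^ N * Vs a (fun l => od u (N + l)%nat))) by ring.
    pose proof (V_bound a (fun l => ev u (N + l)%nat) Ha Ha1) as B1.
    pose proof (V_bound a (fun l => od u (N + l)%nat) Ha Ha1) as B2.
    fold B in B1, B2.
    assert (Hq : Rabs (qq a ^ N) = (a*a)^N).
    { rewrite <- RPow_abs. unfold qq. rewrite Rabs_Ropp, Rabs_right; auto. apply Rle_ge, Rle_0_sqr. }
    specialize (HN N (Nat.le_refl _)). rewrite Rabs_right in HN by (apply Rle_ge, pow_le, Rle_0_sqr).
    rewrite Rabs_mult, Rabs_mult, Rabs_mult, Hq, (Rabs_right a) by lra.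
    assert (HP : 0 <= (a*a)^N) by (apply pow_le, Rle_0_sqr).
    apply Rle_lt_trans with ((a*a)^N * B + a * ((a*a)^N * B)).
    + apply Rplus_le_compat. apply Rmult_le_compat_l; auto.
      apply Rmult_le_compat_l; [lra|]. apply Rmult_le_compat_l; auto.
    + replace ((a*a)^N * B + a * ((a*a)^N * B)) with ((a*a)^N * ((1+a)*B)) by ring.
      assert (0 < (1+a)*B) by (apply Rmult_lt_0_compat; lra).
      apply Rmult_lt_compat_r with (r := (1+a)*B) in HN; auto.
      unfold Rdiv in HN. rewrite Rmult_assoc, Rinv_l in HN by lra. lra.
Qed.

Lemma sep2 a : 0 < a -> a*a < 1 -> forall j u v,
  (forall i, (i < j)%nat -> u i = v i) -> u j <> v j ->
  a^j * gsep a <= dist2 (pnt a u) (pnt a v).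
Proof.
  intros Ha Ha1 j u v Hag Hd.
  destruct (Nat.Even_or_Odd j) as [[m Hm]|[m Hm]]; subst j.
  - eapply Rle_trans; [|apply dist2_ge1]. unfold pnt; simpl fst.
    rewrite pow_mult.
    replace (a^2) with (a*a) by ring.
    apply sep1; auto. intros l Hl. unfold ev. apply Hag. lia.
  - eapply Rle_trans; [|apply dist2_ge2]. unfold pnt; simpl snd.
    replace (a * Vs a (od u) - a * Vs a (od v)) with (a * (Vs a (od u) - Vs a (od v))) by ring.
    rewrite Rabs_mult, (Rabs_right a) by lra.
    rewrite pow_add, pow_mult. replace (a^2) with (a*a) by ring.
    replace (((a*a)^m * a^1) * gsep a) with (a * ((a*a)^m * gsep a)) by ring.
    apply Rmult_le_compat_l; [lra|].
    apply sep1; auto. intros l Hl. unfold od. apply Hag. lia.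
    unfold od. replace (S (2*m)) with (2*m+1)%nat by lia. auto.
Qed.


Lemma dist2_sym x y : dist2 x y = dist2 y x.
Proof. unfold dist2. f_equal. ring. Qed.

Lemma dist2_tri x y z : dist2 x z <= dist2 x y + dist2 y z.
Proof.
  pose proof (triangle (fst x) (snd x) (fst z) (snd z) (fst y) (snd y)) as T.
  unfold dist_euc, Rsqr in T. unfold dist2.
  replace ((fst x - fst z)^2 + (snd x - snd z)^2) with
    ((fst x - fst z) * (fst x - fst z) + (snd x - snd z) * (snd x - snd z)) by ring.
  replace ((fst x - fst y)^2 + (snd x - snd y)^2) with
    ((fst x - fst y) * (fst x - fst y) + (snd x - snd y) * (snd x - snd y)) by ring.
  replace ((fst y - fst z)^2 + (snd y - snd z)^2) with
    ((fst y - fst z) * (fst y - fst z) + (snd y - snd z) * (snd y - snd z)) by ring.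
  exact T.
Qed.

Lemma dist2_nonneg x y : 0 <= dist2 x y.
Proof. unfold dist2. apply sqrt_pos. Qed.

Lemma dist2_Fmap a b x y : 0 <= a -> dist2 (Fmap a b x) (Fmap a b y) = a * dist2 x y.
Proof.
  intro Ha. unfold dist2, Fmap, rot; cbn [fst snd].
  replace (((if b then 1 else -1) + a * - snd x - ((if b then 1 else -1) + a * - snd y)) ^ 2 +
     (a * fst x - a * fst y) ^ 2) with (a^2 * ((fst x - fst y) ^ 2 + (snd x - snd y) ^ 2)) by ring.
  rewrite sqrt_mult, sqrt_pow2; auto. apply pow2_ge_0.
  pose proof (pow2_ge_0 (fst x - fst y)); pose proof (pow2_ge_0 (snd x - snd y)); lra.
Qed.

Lemma Fword_norm a w y : 0 <= a < 1 -> Iseg y -> dist2 (Fword a w y) (0,0) <= / (1 - a).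
Proof.
  intros Ha Hy. assert (Hi : 1 <= / (1 - a)).
  { rewrite <- Rinv_1. apply Rinv_le_contravar; lra. }
  induction w as [|b w IH]; simpl.
  - destruct y as [y1 y2]; unfold Iseg in Hy; simpl in Hy. destruct Hy as [H1 H2]; subst.
    unfold dist2; cbn [fst snd]. replace ((y1 - 0)^2 + (0-0)^2) with (y1^2) by ring.
    rewrite <- Rsqr_pow2, sqrt_Rsqr_abs. unfold Rabs; destruct Rcase_abs; lra.
  - eapply Rle_trans. apply (dist2_tri _ (Fmap a b (0,0))).
    rewrite dist2_Fmap by lra.
    assert (E : dist2 (Fmap a b (0,0)) (0,0) = 1).
    { unfold dist2, Fmap, rot; cbn [fst snd]. replace (_ ^ 2 + _ ^ 2) with 1 by (destruct b; ring). apply sqrt_1. }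
    rewrite E. apply Rmult_le_compat_l with (r := a) in IH; [|lra].
    assert (a * / (1 - a) + 1 = / (1 - a)) by (field; lra). lra.
Qed.


Lemma seg_pt n : forall a h t, 0 < h -> a <= t <= a + INR n * h ->
  exists i, (i <= n)%nat /\ Rabs (t - (a + INR i * h)) <= h.
Proof.
  induction n; intros a h t Hh Ht.
  - exists 0%nat. split; auto. simpl in *. replace (t - (a + 0*h)) with 0 by lra.
    rewrite Rabs_R0; lra.
  - destruct (Rle_lt_dec t (a + INR n * h)).
    + destruct (IHn a h t Hh) as [i [Hi Hi2]]. split; lra. pose proof (pos_INR n). 
      exists i; split; auto.
    + exists (S n). split; auto. rewrite S_INR in *.
      unfold Rabs; destruct Rcase_abs; lra.
Qed.

Lemma natN x : 0 <= x -> exists N : nat, x <= INR N <= x + 1.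
Proof.
  intro Hx. destruct (archimed x) as [H1 H2].
  assert (Hz : (0 <= up x)%Z). { apply le_IZR. lra. }
  exists (Z.to_nat (up x)). rewrite INR_IZR_INZ, Z2Nat.id by auto. lra.
Qed.

Definition rho a := 2 / (1 - a).

Lemma cover a : 1/2 < a < 1 -> forall k, exists C : list pt,
  INR (length C) <= ((2 + /a)/(2 - /a) + 1) * 2^k - ((2 + /a)/(2 - /a)) * (/a)^k /\
  forall x, Sunion a x -> exists c, In c C /\ dist2 x c <= rho a * a^k.
Proof.
  intros Ha. set (be := /a). set (E := (2 + be)/(2 - be)).
  assert (Hbe1 : 1 < be) by (unfold be; rewrite <- Rinv_1; apply Rinv_lt_contravar; lra).
  assert (Hbe2 : be < 2) by (unfold be; replace 2 with (/ (1/2)) by field; apply Rinv_lt_contravar; lra).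
  assert (HE : E * (2 - be) = 2 + be) by (unfold E; field; lra).
  assert (Hrho : 2 <= rho a).
  { unfold rho. unfold Rdiv. replace 2 with (2 * 1) at 1 by ring. apply Rmult_le_compat_l; [lra|].
    rewrite <- Rinv_1. apply Rinv_le_contravar; lra. }
  induction k.
  - exists ((0,0) :: nil). split.
    + simpl. lra.
    + intros x [w [y [Hy ->]]]. exists (0,0). split; [left; auto|].
      eapply Rle_trans. apply Fword_norm; auto. lra.
      simpl. unfold rho. rewrite Rmult_1_r. unfold Rdiv.
      assert (0 < / (1 - a)) by (apply Rinv_0_lt_compat; lra). lra.
  - destruct IHk as [C [HL HC]].
    assert (Hbk : 1 <= be ^ S k) by (apply pow_R1_Rle; lra).
    destruct (natN (be ^ S k)) as [N [HN1 HN2]]; [lra|].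
    set (h := 2 / INR N).
    assert (HNpos : 0 < INR N) by lra.
    assert (Hh : 0 < h) by (unfold h; apply Rdiv_lt_0_compat; lra).
    set (Sg := map (fun i => (-1 + INR i * h, 0)) (seq 0 (S N))).
    exists (map (Fmap a true) C ++ map (Fmap a false) C ++ Sg). split.
    + rewrite !length_app, !length_map. unfold Sg. rewrite length_map, length_seq.
      rewrite !plus_INR, S_INR. simpl pow.
      assert (1 <= be^k) by (apply pow_R1_Rle; lra).
      fold E. fold E in HL.
      assert (HN2' : INR N <= be * be^k + 1) by (simpl in HN2; lra).
      nra.
    + intros x [w [y [Hy ->]]]. destruct w as [|b w].
      * simpl. destruct y as [t y2]. destruct Hy as [[Ht1 Ht2] Hy2]. simpl in Ht1, Ht2, Hy2. subst y2.
        destruct (seg_pt N (-1) h t Hh) as [i [Hi Hti]].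
        { split; [lra|]. unfold h. field_simplify; lra. }
        exists (-1 + INR i * h, 0). split.
        { apply in_or_app; right; apply in_or_app; right. unfold Sg.
          apply (in_map (fun i => (-1 + INR i * h, 0))). apply in_seq. lia. }
        eapply Rle_trans. apply dist2_le. simpl.
        replace (0 - 0) with 0 by ring. rewrite Rabs_R0, Rplus_0_r.
        eapply Rle_trans; [apply Hti|].
        unfold h. 
        assert (HaS : a ^ S k = / be ^ S k) by (unfold be; rewrite pow_inv, Rinv_inv; auto).
        change (a * a^k) with (a ^ S k). rewrite HaS. unfold Rdiv.
        assert (/ INR N <= / be ^ S k) by (apply Rinv_le_contravar; lra).
        assert (0 < / be ^ S k) by (apply Rinv_0_lt_compat; lra).
        nra.
      * simpl. assert (Hs : Sunion a (Fword a w y)) by (exists w, y; auto).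
        destruct (HC _ Hs) as [c [Hc Hd]]. exists (Fmap a b c). split.
        { apply in_or_app. destruct b; [left | right; apply in_or_app; left]; apply in_map; auto. }
        rewrite dist2_Fmap by lra. simpl.
        replace (rho a * (a * a ^ k)) with (a * (rho a * a^k)) by ring.
        apply Rmult_le_compat_l; lra.
Qed.


Lemma Rpower_pos x y : 0 < Rpower x y.
Proof. unfold Rpower. apply exp_pos. Qed.

Lemma Rpower_pow_k a s k : 0 < a -> Rpower (a^k) s = (Rpower a s)^k.
Proof.
  intro Ha. rewrite <- (Rpower_pow k a) by auto. rewrite Rpower_mult.
  rewrite <- (Rpower_pow k (Rpower a s)) by apply Rpower_pos. rewrite Rpower_mult.
  f_equal. ring.
Qed.

Lemma ln_neg a : 0 < a < 1 -> ln a < 0.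
Proof. intro. rewrite <- ln_1. apply ln_increasing; lra. Qed.

Lemma Rpower_d a : 0 < a < 1 -> Rpower a (- ln 2 / ln a) = / 2.
Proof.
  intro Ha. pose proof (ln_neg a Ha). unfold Rpower.
  replace (- ln 2 / ln a * ln a) with (- ln 2) by (field; lra).
  rewrite exp_Ropp, exp_ln; lra.
Qed.

Lemma Rpower_lt_half a s : 0 < a < 1 -> - ln 2 / ln a < s -> Rpower a s < / 2.
Proof.
  intros Ha Hs. rewrite <- (Rpower_d a Ha). unfold Rpower. apply exp_increasing.
  pose proof (ln_neg a Ha). nra.
Qed.

Lemma sum_ind (L : nat) (A : R) N :
  sum_f_R0 (fun n => if Nat.ltb n L then A else 0) N = INR (Nat.min (S N) L) * A.
Proof.
  induction N; cbn [sum_f_R0].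
  - destruct (Nat.ltb_spec 0 L). replace (Nat.min 1 L) with 1%nat by lia. simpl; ring.
    replace (Nat.min 1 L) with 0%nat by lia. simpl; ring.
  - rewrite IHN. destruct (Nat.ltb_spec (S N) L).
    + replace (Nat.min (S (S N)) L) with (S (Nat.min (S N) L)) by lia. rewrite S_INR. ring.
    + replace (Nat.min (S (S N)) L) with (Nat.min (S N) L) by lia. ring.
Qed.

Lemma sum_half N : sum_f_R0 (fun n => (1/2)^n) N = 2 - (1/2)^N.
Proof. induction N; simpl. lra. rewrite IHN. lra. Qed.

Lemma d_pos a : 0 < a < 1 -> 0 < - ln 2 / ln a.
Proof.
  intro Ha. pose proof (ln_neg a Ha).
  assert (0 < ln 2) by (rewrite <- ln_1; apply ln_increasing; lra).
  assert (/ ln a < 0) by (apply Rinv_lt_0_compat; lra).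
  unfold Rdiv. nra.
Qed.

Lemma upper a s : 1/2 < a < 1 -> - ln 2 / ln a < s -> hausdorff_null s (S_alpha a).
Proof.
  intros Ha Hs delta eps Hd He.
  assert (Ha0 : 0 < a < 1) by lra.
  pose proof (d_pos a Ha0) as Hd0.
  assert (Hs0 : 0 < s) by lra.
  set (E := (2 + /a)/(2 - /a)). set (Bc := E + 1).
  assert (Hbe2 : /a < 2) by (replace 2 with (/ (1/2)) by field; apply Rinv_lt_contravar; lra).
  assert (Hbe1 : 1 < /a) by (rewrite <- Rinv_1; apply Rinv_lt_contravar; lra).
  assert (HE : 0 < E) by (unfold E; apply Rdiv_lt_0_compat; lra).
  assert (HBc : 0 < Bc) by (unfold Bc; lra).
  assert (Hrho : 0 < rho a) by (unfold rho; apply Rdiv_lt_0_compat; lra).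
  set (q := 2 * Rpower a s).
  pose proof (Rpower_lt_half a s Ha0 Hs). pose proof (Rpower_pos a s).
  assert (Hq : Rabs q < 1) by (unfold q; rewrite Rabs_right; lra).
  set (P := Rpower (4 * rho a) s).
  assert (HP : 0 < P) by apply Rpower_pos.
  destruct (pow_lt_1_zero q Hq (eps / 2 / (Bc * P))) as [K0 HK0].
  { apply Rdiv_lt_0_compat. lra. apply Rmult_lt_0_compat; lra. }
  assert (Haa : Rabs a < 1) by (rewrite Rabs_right; lra).
  destruct (pow_lt_1_zero a Haa (delta / (4 * rho a))) as [K1 HK1].
  { apply Rdiv_lt_0_compat; lra. }
  set (k := Nat.max K0 K1).
  specialize (HK0 k ltac:(lia)). specialize (HK1 k ltac:(lia)).
  assert (Hak : 0 < a ^ k) by (apply pow_lt; lra).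
  rewrite Rabs_right in HK1 by lra.
  assert (Hqk : 0 <= q ^ k) by (apply pow_le; unfold q; lra).
  rewrite Rabs_right in HK0 by lra.
  destruct (cover a Ha k) as [C [HL HC]].
  fold E in HL.
  set (L := length C).
  set (D := 4 * rho a * a^k).
  assert (HD : 0 < D) by (unfold D; apply Rmult_lt_0_compat; lra).
  assert (HDd : D < delta).
  { unfold D. apply Rmult_lt_compat_l with (r := 4 * rho a) in HK1; [|lra].
    replace (4 * rho a * (delta / (4 * rho a))) with delta in HK1 by (field; lra).
    lra. }
  set (A := Rpower D s).
  assert (HA : A = P * (Rpower a s)^k).
  { unfold A, D, P. rewrite <- Rpower_mult_distr, Rpower_pow_k; auto; lra. }
  assert (HLA : INR L * A <= eps / 2).
  { assert (INR L <= Bc * 2^k).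
    { unfold L. assert (0 < E * (/a)^k) by (apply Rmult_lt_0_compat; auto; apply pow_lt; lra).
      unfold Bc. lra. }
    apply Rle_trans with (Bc * 2^k * A).
    apply Rmult_le_compat_r; auto. unfold A; left; apply Rpower_pos.
    rewrite HA. replace (Bc * 2^k * (P * Rpower a s ^ k)) with ((Bc * P) * q^k)
      by (unfold q; rewrite Rpow_mult_distr; ring).
    apply Rmult_lt_compat_l with (r := Bc * P) in HK0; [|apply Rmult_lt_0_compat; lra].
    replace (Bc * P * (eps / 2 / (Bc * P))) with (eps / 2) in HK0 by (field; lra).
    lra. }
  set (pad := fun n : nat => Rmin delta (Rpower (eps / 4 * (1/2)^n) (1/s))).
  exists (fun n x => (n < L)%nat /\ dist2 x (nth n C (0,0)) <= 2 * rho a * a^k).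
  exists (fun n => if Nat.ltb n L then D else pad n).
  split; [|split].
  - intros x Hx. destruct (Hx (rho a * a^k)) as [y [Hy Hxy]].
    { apply Rmult_lt_0_compat; auto. }
    destruct (HC y Hy) as [c [Hc Hyc]].
    destruct (In_nth C c (0,0) Hc) as [n [Hn Hnc]].
    exists n. split; auto. rewrite Hnc.
    eapply Rle_trans. apply (dist2_tri _ y). lra.
  - intro n. destruct (Nat.ltb_spec n L).
    + split. lra. intros x y [_ Hx] [_ Hy]. eapply Rle_trans. apply (dist2_tri _ (nth n C (0,0))).
      rewrite (dist2_sym _ y). unfold D. lra.
    + split. split. unfold pad. apply Rmin_glb_lt; auto. apply Rpower_pos. unfold pad; apply Rmin_l.
      intros x y [Hn _]. lia.
  - intro N.
    apply Rle_trans with (sum_f_R0 (fun n => (if Nat.ltb n L then A else 0) + eps / 4 * (1/2)^n) N).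
    + apply sum_Rle. intros n _. destruct (Nat.ltb_spec n L).
      * assert (0 < eps / 4 * (1/2)^n) by (apply Rmult_lt_0_compat; [lra| apply pow_lt; lra]). unfold A; lra.
      * unfold pad. eapply Rle_trans. apply Rle_Rpower_l. lra. split.
        apply Rmin_glb_lt; auto. apply Rpower_pos. apply Rmin_r.
        rewrite Rpower_mult. replace (1 / s * s) with 1 by (field; lra).
        rewrite Rpower_1. lra. apply Rmult_lt_0_compat; [lra| apply pow_lt; lra].
    + rewrite sum_plus, sum_ind.
      replace (sum_f_R0 (fun n => eps / 4 * (1 / 2) ^ n) N) with (eps / 4 * sum_f_R0 (fun n => (1/2)^n) N)
        by (rewrite scal_sum; apply sum_eq; intros; ring).
      rewrite sum_half.
      assert (INR (Nat.min (S N) L) <= INR L) by (apply le_INR; lia).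
      assert (0 < (1/2)^N) by (apply pow_lt; lra).
      assert (0 < A) by apply Rpower_pos.
      nra.
Qed.


Lemma sum_mono (f : nat -> R) : (forall n, 0 <= f n) -> forall N M, (N <= M)%nat ->
  sum_f_R0 f N <= sum_f_R0 f M.
Proof.
  intros Hf N M H. induction H. lra. simpl. pose proof (Hf (S m)). lra.
Qed.

Lemma sum_ge_term (f : nat -> R) : (forall n, 0 <= f n) -> forall n N, (n <= N)%nat ->
  f n <= sum_f_R0 f N.
Proof.
  intros Hf n N H. apply Rle_trans with (sum_f_R0 f n).
  - destruct n. simpl; lra. simpl.
    assert (0 <= sum_f_R0 f n).
    { clear H. induction n. simpl; auto. simpl. pose proof (Hf (S n)). lra. }
    lra.
  - apply sum_mono; auto.
Qed.

Section Konig.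
Variable c : nat -> nat -> bool.
Variable k : nat -> nat.

Definition compat n m (f : nat -> bool) := forall i, (i < Nat.min (k n) m)%nat -> c n i = f i.
Definition term n m f : R :=
  if excluded_middle_informative (compat n m f) then (1/2)^(k n - m) else 0.
Definition load N m f := sum_f_R0 (fun n => term n m f) N.
Definition upd (f : nat -> bool) m (b : bool) := fun i => if Nat.eqb i m then b else f i.

Lemma term_nonneg n m f : 0 <= term n m f.
Proof. unfold term. destruct excluded_middle_informative. apply pow_le; lra. lra. Qed.

Lemma compat_le n m f b : (k n <= m)%nat -> (compat n (S m) (upd f m b) <-> compat n m f).
Proof.
  intro H. unfold compat, upd. split; intros Hc i Hi.
  - specialize (Hc i ltac:(lia)). destruct (Nat.eqb_spec i m); [lia|auto].
  - destruct (Nat.eqb_spec i m); [lia|]. apply Hc; lia.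
Qed.

Lemma compat_gt n m f b : (m < k n)%nat -> (compat n (S m) (upd f m b) <-> compat n m f /\ c n m = b).
Proof.
  intro H. unfold compat, upd. split.
  - intros Hc. split.
    + intros i Hi. specialize (Hc i ltac:(lia)). destruct (Nat.eqb_spec i m); [lia|auto].
    + specialize (Hc m ltac:(lia)). rewrite Nat.eqb_refl in Hc. auto.
  - intros [Hc Hb] i Hi. destruct (Nat.eqb_spec i m). subst; auto. apply Hc; lia.
Qed.

Lemma term_split n m f :
  term n m f = (term n (S m) (upd f m false) + term n (S m) (upd f m true)) / 2.
Proof.
  unfold term.
  destruct (Compare_dec.le_lt_dec (k n) m) as [H|H].
  - pose proof (compat_le n m f false H). pose proof (compat_le n m f true H).
    replace (k n - m)%nat with 0%nat by lia. replace (k n - S m)%nat with 0%nat by lia.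
    repeat destruct excluded_middle_informative; try tauto; simpl; lra.
  - pose proof (compat_gt n m f false H). pose proof (compat_gt n m f true H).
    replace (k n - m)%nat with (S (k n - S m)) by lia. simpl.
    repeat destruct excluded_middle_informative; try tauto;
      try (destruct (c n m); intuition congruence); try lra.
Qed.

Lemma load_split N m f :
  load N m f = (load N (S m) (upd f m false) + load N (S m) (upd f m true)) / 2.
Proof.
  unfold load. induction N; simpl. apply term_split.
  rewrite IHN, (term_split (S N) m f). lra.
Qed.

Definition Inv m f := forall N, load N m f <= 1/2.

Lemma Inv_step m f : Inv m f -> Inv (S m) (upd f m false) \/ Inv (S m) (upd f m true).
Proof.
  intro H. apply NNPP. intro Hn. apply not_or_and in Hn. destruct Hn as [H0 H1].
  apply not_all_ex_not in H0. apply not_all_ex_not in H1.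
  destruct H0 as [N0 H0]. destruct H1 as [N1 H1].
  apply Rnot_le_lt in H0. apply Rnot_le_lt in H1.
  specialize (H (Nat.max N0 N1)). rewrite load_split in H.
  assert (load N0 (S m) (upd f m false) <= load (Nat.max N0 N1) (S m) (upd f m false))
    by (apply sum_mono; [intro; apply term_nonneg| lia]).
  assert (load N1 (S m) (upd f m true) <= load (Nat.max N0 N1) (S m) (upd f m true))
    by (apply sum_mono; [intro; apply term_nonneg| lia]).
  lra.
Qed.

Definition nb m f : bool :=
  if excluded_middle_informative (Inv (S m) (upd f m false)) then false else true.

Lemma nb_spec m f : Inv m f -> Inv (S m) (upd f m (nb m f)).
Proof.
  intro H. unfold nb. destruct excluded_middle_informative; auto.
  destruct (Inv_step m f H); tauto.
Qed.

Fixpoint fs (m : nat) : nat -> bool :=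
  match m with O => fun _ => false | S m' => upd (fs m') m' (nb m' (fs m')) end.

Definition upath : nat -> bool := fun i => fs (S i) i.

Lemma fs_upath m i : (i < m)%nat -> fs m i = upath i.
Proof.
  induction m; intro H. lia.
  unfold upath. simpl. unfold upd at 1. destruct (Nat.eqb_spec i m).
  - subst. simpl. unfold upd. rewrite Nat.eqb_refl. reflexivity.
  - rewrite IHm by lia. reflexivity.
Qed.

Lemma konig : (forall N, sum_f_R0 (fun n => (1/2)^(k n)) N <= 1/2) ->
  forall n, ~ (forall i, (i < k n)%nat -> upath i = c n i).
Proof.
  intros Hs.
  assert (HI : forall m, Inv m (fs m)).
  { induction m.
    - intro N. unfold load. eapply Rle_trans; [|apply (Hs N)]. right. apply sum_eq.
      intros i _. unfold term. destruct excluded_middle_informative.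
      + f_equal. lia.
      + exfalso. apply n. intros j Hj. lia.
    - simpl. apply nb_spec. auto. }
  intros n Hn. specialize (HI (k n) n). unfold load in HI.
  pose proof (sum_ge_term (fun n0 => term n0 (k n) (fs (k n))) (fun _ => term_nonneg _ _ _) n n (le_n n)).
  unfold term at 1 in H. destruct excluded_middle_informative.
  - rewrite Nat.sub_diag in H. simpl in H. lra.
  - apply n0. intros i Hi. rewrite <- Hn by lia. symmetry. apply fs_upath. lia.
Qed.
End Konig.



Lemma choice_nat {A : Type} (P : nat -> A -> Prop) : (forall n, exists x, P n x) -> exists f, forall n, P n (f n).
Proof.
  intro H. exists (fun n => proj1_sig (constructive_indefinite_description _ (H n))).
  intro n. exact (proj2_sig (constructive_indefinite_description _ (H n))).
Qed.

Lemma exp_le x y : x <= y -> exp x <= exp y.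
Proof. intro H. destruct (Req_dec x y). subst; lra. left; apply exp_increasing; lra. Qed.

Lemma pow_le1 a m : 0 <= a <= 1 -> a ^ m <= 1.
Proof. intro Ha. induction m; simpl. lra. assert (0 <= a^m) by (apply pow_le; lra). nra. Qed.

Lemma pow_anti a j m : 0 < a <= 1 -> (j <= m)%nat -> a ^ m <= a ^ j.
Proof.
  intros Ha H. replace m with (j + (m - j))%nat by lia. rewrite pow_add.
  assert (0 < a^j) by (apply pow_lt; lra). pose proof (pow_le1 a (m - j) ltac:(lra)). nra.
Qed.

Lemma first_diff (u v : nat -> bool) K : ~ (forall i, (i < K)%nat -> u i = v i) ->
  exists j, (j < K)%nat /\ (forall i, (i < j)%nat -> u i = v i) /\ u j <> v j.
Proof.
  induction K; intro H.
  - exfalso. apply H. intros; lia.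
  - destruct (classic (forall i, (i < K)%nat -> u i = v i)) as [H1|H1].
    + exists K. split; [lia|]. split; auto. intro E. apply H. intros i Hi.
      destruct (Nat.eq_dec i K). subst; auto. apply H1; lia.
    + destruct (IHK H1) as [j [Hj Hj2]]. exists j. split; [lia|auto].
Qed.

Lemma exk a g x : 0 < a < 1 -> 0 < g -> 0 < x < g -> exists k, g * a ^ (S k) <= x /\ x < g * a ^ k.
Proof.
  intros Ha Hg Hx.
  assert (Haa : Rabs a < 1) by (rewrite Rabs_right; lra).
  destruct (pow_lt_1_zero a Haa (x / g)) as [K HK]. apply Rdiv_lt_0_compat; lra.
  specialize (HK (S K) ltac:(lia)). rewrite Rabs_right in HK by (left; apply pow_lt; lra).
  assert (HK' : g * a ^ S K <= x).
  { apply Rmult_lt_compat_l with (r := g) in HK; auto.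
    replace (g * (x / g)) with x in HK by (field; lra). lra. }
  clear HK. induction K.
  - exists 0%nat. simpl. lra.
  - destruct (Rlt_dec x (g * a ^ S K)).
    + exists (S K). split; auto.
    + apply IHK. lra.
Qed.

Lemma lower a s : 1/2 < a -> a * a < 1/2 -> 0 < s < - ln 2 / ln a -> ~ hausdorff_null s (S_alpha a).
Proof.
  intros Ha Ha2 Hs Hn.
  assert (Ha1 : a < 1) by nra.
  assert (Ha0 : 0 < a < 1) by lra.
  assert (Haa1 : a * a < 1) by lra.
  set (d := - ln 2 / ln a).
  set (g := gsep a).
  assert (Hg : 0 < g).
  { unfold g, gsep. assert (a * a / (1 - a * a) < 1).
    { apply (Rmult_lt_reg_r (1 - a*a)). lra. unfold Rdiv. rewrite Rmult_assoc, Rinv_l; lra. }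
    lra. }
  set (W := Rpower (g * a) d).
  assert (HW : 0 < W) by apply Rpower_pos.
  destruct (Hn (Rmin 1 (g/2)) (W / 2)) as [U [r [HU [Hr Hsum]]]].
  { apply Rmin_glb_lt; lra. }
  { lra. }
  assert (Hrn : forall n, 0 < r n < g /\ r n <= 1).
  { intro n. destruct (Hr n) as [[H1 H2] _]. pose proof (Rmin_l 1 (g/2)). pose proof (Rmin_r 1 (g/2)). lra. }
  destruct (choice_nat (fun n k => g * a ^ (S k) <= r n /\ r n < g * a ^ k)) as [kf Hkf].
  { intro n. destruct (Hrn n) as [H1 _]. apply exk; auto. }
  destruct (choice_nat (fun n v => (exists u, U n (pnt a u)) -> U n (pnt a v))) as [cu Hcu].
  { intro n. destruct (classic (exists u, U n (pnt a u))) as [[u Hu]|H].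
    - exists u; auto.
    - exists (fun _ => false). intro; contradiction. }
  assert (Hw : forall N, sum_f_R0 (fun n => (1/2)^(kf n)) N <= 1/2).
  { intro N. apply Rle_trans with (sum_f_R0 (fun n => Rpower (r n) s / W) N).
    - apply sum_Rle. intros n _.
      destruct (Hkf n) as [Hk1 Hk2]. destruct (Hrn n) as [[Hr1 Hr2] Hr3].
      assert (E1 : (1/2)^(kf n) = Rpower (a ^ kf n) d).
      { rewrite Rpower_pow_k by lra. unfold d. rewrite Rpower_d by lra. f_equal; field. }
      rewrite E1. unfold Rdiv. apply (Rmult_le_reg_l W); auto.
      rewrite (Rmult_comm (Rpower (r n) s)), <- Rmult_assoc, Rinv_r, Rmult_1_l by lra.
      unfold W. rewrite Rpower_mult_distr.
      2: { apply Rmult_lt_0_compat; lra. }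
      2: { apply pow_lt; lra. }
      apply Rle_trans with (Rpower (r n) d).
      + apply Rle_Rpower_l. unfold d; left; apply d_pos; lra.
        split. apply Rmult_lt_0_compat. apply Rmult_lt_0_compat; lra. apply pow_lt; lra.
        simpl in Hk1. lra.
      + unfold Rpower. apply exp_le.
        assert (ln (r n) <= 0).
        { destruct (Req_dec (r n) 1) as [E|E]. rewrite E, ln_1; lra.
          left. rewrite <- ln_1. apply ln_increasing; lra. }
        fold d in Hs. nra.
    - replace (sum_f_R0 (fun n => Rpower (r n) s / W) N) with (/ W * sum_f_R0 (fun n => Rpower (r n) s) N)
        by (rewrite scal_sum; apply sum_eq; intros; unfold Rdiv; ring).
      specialize (Hsum N).
      apply Rle_trans with (/ W * (W / 2)).
      + apply Rmult_le_compat_l; auto. left; apply Rinv_0_lt_compat; auto.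
      + right. field. lra. }
  pose proof (konig cu kf Hw) as HK.
  set (u := upath cu kf) in HK.
  destruct (HU (pnt a u) (pnt_in_S a u ltac:(lra) Haa1)) as [n Hun].
  assert (Hcn : U n (pnt a (cu n))) by (apply Hcu; exists u; auto).
  destruct (Hr n) as [_ Hdiam].
  pose proof (Hdiam _ _ Hun Hcn) as Hdist.
  destruct (first_diff u (cu n) (kf n) (HK n)) as [j [Hj [Hag Hne]]].
  pose proof (sep2 a ltac:(lra) Haa1 j u (cu n) Hag Hne) as Hsep.
  destruct (Hkf n) as [_ Hk2].
  pose proof (pow_anti a j (kf n) ltac:(lra) ltac:(lia)).
  assert (g * a ^ kf n <= g * a ^ j) by (apply Rmult_le_compat_l; lra).
  fold g in Hsep. rewrite Rmult_comm in Hsep. lra.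
Qed.


Lemma part1 (alpha : R) : 1/2 < alpha < 1 / sqrt 2 ->
  hausdorff_dim (S_alpha alpha) (- ln 2 / ln alpha).
Proof.
  intro Ha.
  assert (Hs2 : sqrt 2 * sqrt 2 = 2) by (apply sqrt_sqrt; lra).
  assert (Hs0 : 0 < sqrt 2) by (apply sqrt_lt_R0; lra).
  assert (Has : alpha * sqrt 2 < 1).
  { destruct Ha as [_ H]. apply Rmult_lt_compat_r with (r := sqrt 2) in H; auto.
    replace (1 / sqrt 2 * sqrt 2) with 1 in H by (field; lra). lra. }
  assert (Ha2 : alpha * alpha < 1/2) by nra.
  assert (Ha1 : alpha < 1) by nra.
  assert (Hd : 0 < - ln 2 / ln alpha) by (apply d_pos; lra).
  split.
  - intros x [Hx Hn]. destruct (Rle_lt_dec (- ln 2 / ln alpha) x); auto.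
    exfalso. apply (lower alpha x); auto; lra.
  - intros b Hb. destruct (Rle_lt_dec b (- ln 2 / ln alpha)); auto.
    exfalso. set (s := (- ln 2 / ln alpha + b) / 2).
    assert (b <= s).
    { apply Hb. split. unfold s; lra. apply upper. lra. unfold s; lra. }
    unfold s in H. lra.
Qed.

Lemma part2 (h : R) : 1 < h < 2 ->
  hausdorff_dim (S_alpha (Rpower 2 (- (1 / h)))) h.
Proof.
  intro Hh.
  set (a := Rpower 2 (- (1 / h))).
  assert (Hl2 : 0 < ln 2) by (rewrite <- ln_1; apply ln_increasing; lra).
  assert (Hla : ln a = - (1/h) * ln 2) by (unfold a, Rpower; apply ln_exp).
  assert (Hd : - ln 2 / ln a = h) by (rewrite Hla; field; split; lra).
  rewrite <- Hd. apply part1. split.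
  - replace (1/2) with (Rpower 2 (-1)).
    + unfold a. apply Rpower_lt. lra.
      apply Ropp_lt_contravar. replace (1/h) with (/h) by (field; lra).
      change (/ h < 1). rewrite <- Rinv_1. apply Rinv_lt_contravar; lra.
    + replace (-1) with (- (1)) by ring. rewrite Rpower_Ropp, Rpower_1; lra.
  - replace (1 / sqrt 2) with (Rpower 2 (- / 2)).
    + unfold a. apply Rpower_lt. lra.
      apply Ropp_lt_contravar. replace (1/h) with (/h) by (field; lra).
      apply Rinv_lt_contravar; lra.
    + rewrite Rpower_Ropp, Rpower_sqrt; lra.
Qed.

Theorem mainTheorem12 :
  (forall alpha : R, 1/2 < alpha < 1 / sqrt 2 ->
     hausdorff_dim (S_alpha alpha) (- ln 2 / ln alpha)) /\
  (forall h : R, 1 < h < 2 ->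
     hausdorff_dim (S_alpha (Rpower 2 (- (1 / h)))) h).
Proof. split; [exact part1 | exact part2]. Qed.
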